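(* Let $G$ be a distance-regular graph with degree $k$, parameter $\lambda>0$, and least adjacency eigenvalue $s$. Then \[ \lambda + \frac{k}{\lambda} > \frac{k}{|s|}. \]
   Context: A connected graph is distance-regular if for any two vertices $u,v$ at distance $i$, the numbers of neighbors of $v$ at distance $i-1$, $i$, and $i+1$ from $u$ depend only on $i$. Here $k$ is the degree, $\lambda$ is the number of common neighbors of two adjacent vertices, and $s$ is the least eigenvalue of the adjacency matrix ($s<0$). *)

(* Defs.v *)
From mathcomp Require Import all_boot all_order all_algebra.
From mathcomp Require Import reals.
Set Implicit Arguments. Unset Strict Implicit. Unset Printing Implicit Defensive.
Import Order.TTheory GRing.Theory Num.Theory.

Section Graphs.
Variable T : finType.
Variable e : rel T.

Definition simple_graph := symmetric e /\ irreflexive e.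

Fixpoint walk (n : nat) (x y : T) : bool :=
  if n is m.+1 then [exists z, e x z && walk m z y] else x == y.

Definition gdist (x y : T) (i : nat) : bool :=
  walk i x y && [forall j : 'I_i, ~~ walk j x y].

Definition gconnected := forall x y : T, exists i, gdist x y i.

Definition distance_regular :=
  simple_graph /\ gconnected /\
  exists c a b : nat -> nat, forall (u v : T) (i : nat), gdist u v i ->
    [/\ 0 < i -> #|[set w | e v w && gdist u w i.-1]| = c i,
        #|[set w | e v w && gdist u w i]| = a i &
        #|[set w | e v w && gdist u w i.+1]| = b i].

Definition regular_deg (k : nat) := forall v : T, #|[set w | e v w]| = k.

Definition lambda_param (l : nat) :=
  forall u v : T, e u v -> #|[set w | e u w && e v w]| = l.
End Graphs.

Definition adjmx (R : nzRingType) (n : nat) (e : rel 'I_n) : 'M[R]_n :=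
  (\matrix_(i, j) (e i j)%:R)%R.

Definition least_eigenvalue (R : realType) (n : nat) (A : 'M[R]_n) (s : R) :=
  eigenvalue A s /\ forall t, eigenvalue A t -> (s <= t)%R.

(* Main.v *)
Require Import Defs.
From mathcomp Require Import all_boot all_order all_algebra.
From mathcomp Require Import reals complex.
From mathcomp Require Import ring lra.
Import Order.TTheory GRing.Theory Num.Theory.
Local Open Scope ring_scope.
Lemma final_ineq (R : realFieldType) n (d : 'I_n -> R) (s : R) (k l : nat) :
  (0 < n)%N -> (0 < k)%N -> (0 < l)%N -> (forall j, s <= d j) ->
  \sum_j d j = 0 -> \sum_j d j ^+ 2 = n%:R * k%:R ->
  \sum_j d j ^+ 3 = n%:R * k%:R * l%:R ->
  k%:R / `|s| < l%:R + k%:R / l%:R.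
Proof.
move=> n0 k0 l0 sd S1 S2 S3.
set K : R := k%:R; set L : R := l%:R; set N : R := n%:R.
have K0 : 0 < K by rewrite ltr0n.
have L0 : 0 < L by rewrite ltr0n.
have N0 : 0 < N by rewrite ltr0n.
pose F j := (d j - s) * (d j - L) ^+ 2.
have F0 j : 0 <= F j by rewrite /F mulr_ge0 ?sqr_ge0 // subr_ge0.
have SF : \sum_j F j = N * (- (K * L) - s * (K + L ^+ 2)).
  have -> : \sum_j F j = \sum_j (d j ^+ 3 + (-(2 * L + s)) * d j ^+ 2
       + (L ^+ 2 + 2 * L * s) * d j + (- (s * L ^+ 2))).
    by apply: eq_bigr => j _; rewrite /F; ring.
  rewrite !big_split /= -!mulr_sumr S1 S2 S3 sumr_const card_ord.
  rewrite -/N -[_ *+ n]mulr_natl -/N; ring.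
have Fpos : 0 < \sum_j F j.
  rewrite lt_def sumr_ge0 // andbT; apply/eqP => Z.
  have G0 j : (d j - s) * (d j - L) = 0.
    have /(_ j isT) := psumr_eq0P (fun j _ => F0 j) Z.
    rewrite /F => /eqP; rewrite mulf_eq0 expf_eq0 /= => /orP[] /eqP->.
      by rewrite mul0r.
    by rewrite mulr0.
  have : \sum_j d j * ((d j - s) * (d j - L)) = 0.
    by rewrite big1 // => j _; rewrite G0 mulr0.
  have -> : \sum_j d j * ((d j - s) * (d j - L)) = \sum_j (d j ^+ 3
      + (- (s + L)) * d j ^+ 2 + (s * L) * d j).
    by apply: eq_bigr => j _; ring.
  rewrite !big_split /= -!mulr_sumr S1 S2 S3 => E.
  have sneg : s < 0.
    move: Z; rewrite SF => /eqP; rewrite mulf_eq0 (gt_eqF N0) /= => /eqP E2.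
    rewrite ltNge; apply/negP => s0.
    have : 0 <= s * (K + L ^+ 2) by rewrite mulr_ge0 // addr_ge0 ?sqr_ge0 ?ltW.
    have : 0 < K * L by rewrite mulr_gt0.
    lra.
  have : N * K * (- s) = 0 by rewrite -E; ring.
  apply/eqP; rewrite !mulf_neq0 ?gt_eqF ?oppr_gt0 //.
have H : 0 < - (K * L) - s * (K + L ^+ 2).
  by move: Fpos; rewrite SF pmulr_rgt0.
have KL2 : 0 < K + L ^+ 2 by rewrite addr_gt0 // exprn_gt0.
have sneg : s < 0.
  rewrite ltNge; apply/negP => s0.
  have : 0 <= s * (K + L ^+ 2) by rewrite mulr_ge0 // ltW.
  have : 0 < K * L by rewrite mulr_gt0.
  lra.
rewrite ltr0_norm //.
have a0 : 0 < - s by rewrite oppr_gt0.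
rewrite ltr_pdivrMr // -subr_gt0.
have -> : (L + K / L) * - s - K = (- (K * L) - s * (K + L ^+ 2)) / L.
  by field; rewrite gt_eqF.
by rewrite divr_gt0.
Qed.

Lemma sum_bool_card (R : nzRingType) n (P : pred 'I_n) :
  \sum_j ((P j : nat)%:R : R) = (#|[set j | P j]|)%:R.
Proof.
rewrite -sum1dep_card natr_sum [RHS]big_mkcond /=.
by apply: eq_bigr => j _; case: (P j).
Qed.

Lemma adj_entry (R : nzRingType) n (e : rel 'I_n) i j :
  adjmx R e i j = (e i j)%:R.
Proof. by rewrite mxE. Qed.

Lemma tr_adj1 (R : nzRingType) n (e : rel 'I_n) :
  irreflexive e -> \tr (adjmx R e) = 0.
Proof.
move=> irr; rewrite /mxtrace big1 // => i _.
by rewrite adj_entry irr.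
Qed.

Lemma adj2_entry (R : nzRingType) n (e : rel 'I_n) i j :
  symmetric e -> (adjmx R e *m adjmx R e) i j = (#|[set w | e i w && e j w]|)%:R.
Proof.
move=> sym. rewrite mxE. 
rewrite -(sum_bool_card R n (fun w => e i w && e j w)).
apply: eq_bigr => m _.
rewrite !adj_entry (sym m j).
by case: (e i m); case: (e j m); rewrite /= ?mul1r ?mul0r ?mulr0.
Qed.

Lemma tr_adj2 (R : nzRingType) n (e : rel 'I_n) k :
  symmetric e -> regular_deg e k -> \tr (adjmx R e *m adjmx R e) = (n * k)%:R.
Proof.
move=> sym reg; rewrite /mxtrace.
rewrite (eq_bigr (fun _ => (k%:R : R))); last first.
  move=> i _; rewrite adj2_entry // -(reg i); congr (_%:R).
  by apply: eq_card => w; rewrite !inE andbb.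
by rewrite sumr_const card_ord natrM mulr_natl.
Qed.

Lemma tr_adj3 (R : nzRingType) n (e : rel 'I_n) k l :
  symmetric e -> regular_deg e k -> lambda_param e l ->
  \tr (adjmx R e *m adjmx R e *m adjmx R e) = (n * k * l)%:R.
Proof.
move=> sym reg lam; rewrite /mxtrace.
rewrite (eq_bigr (fun _ => ((k * l)%:R : R))); last first.
  move=> i _; rewrite mxE.
  rewrite (eq_bigr (fun j => ((e i j : nat)%:R * l%:R : R))); last first.
    move=> j _; rewrite adj2_entry // adj_entry (sym j i).
    case E: (e i j); rewrite /= ?mul1r ?mulr1 ?mul0r ?mulr0 //.
    by rewrite (lam _ _ E).
  by rewrite -mulr_suml (sum_bool_card R n (e i)) reg natrM.
by rewrite sumr_const card_ord -mulnA [RHS]natrM mulr_natl.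
Qed.

Section Spec.
Variable R : realType.
Local Notation C := (R[i]).
Local Notation f := (real_complex R).

Lemma tr_map n (M : 'M[R]_n) : \tr (map_mx f M) = f (\tr M).
Proof. by rewrite /mxtrace rmorph_sum; apply: eq_bigr => i _; rewrite mxE. Qed.

Lemma real_complex_real (x : R) : f x \is Num.real.
Proof.
rewrite realE; case: (lerP 0 x) => hx.
  by rewrite ler0c hx.
by apply/orP; right; rewrite lecR ltW.
Qed.

Lemma real_Re (x : C) : x \is Num.real -> x = f (complex.Re x).
Proof.
move=> xr; rewrite [LHS]complexE.
suff -> : complex.Im x = 0 by rewrite mulr0 addr0.
move: xr; rewrite realE => /orP[]; rewrite lecE /= => /andP[/eqP h _]; rewrite ?h //.

Qed.

Lemma conjmx_tr n (P X : 'M[C]_n) : P \in unitmx ->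
  \tr (invmx P *m X *m P) = \tr X.
Proof. by move=> Pu; rewrite mxtrace_mulC mulmxA mulmxV ?mul1mx. Qed.

Lemma conjmx_mul n (P X Y : 'M[C]_n) : P \in unitmx ->
  (invmx P *m X *m P) *m (invmx P *m Y *m P) = invmx P *m (X *m Y) *m P.
Proof.
move=> Pu; rewrite !mulmxA; congr (_ *m _).
by rewrite -[_ *m invmx P]mulmxA mulmxV // mulmx1 -!mulmxA.
Qed.

Lemma spectral_real n (A : 'M[R]_n) : A^T = A ->
  exists d : 'I_n -> R, (forall j, eigenvalue A (d j)) /\
    [/\ \tr A = \sum_j d j, \tr (A *m A) = \sum_j d j ^+ 2 &
        \tr (A *m A *m A) = \sum_j d j ^+ 3].
Proof.
move=> Asym.
pose AC := map_mx f A.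
have herm : AC \is hermsymmx.
  apply: realsym_hermsym.
    apply/is_hermitianmxP; rewrite expr0 scale1r map_mx_id //.
    by rewrite /AC map_trmx Asym.
  by apply/mxOverP => i j; rewrite mxE real_complex_real.
have /hermitian_normalmx /orthomx_spectralP AE := herm.
have Dreal := hermitian_spectral_diag_real herm.
set P := spectralmx AC in AE; set D := spectral_diag AC in AE Dreal.
have Pu : P \in unitmx by apply: spectral_unit.
pose d j := complex.Re (D 0 j).
have Dd j : D 0 j = f (d j) by apply: real_Re; move/mxOverP: Dreal; apply.
exists d; split.
  move=> j; rewrite eigenvalue_root_char -(fmorph_root f) map_char_poly.
  rewrite -eigenvalue_root_char. suff H : eigenvalue AC (D 0 j) by move: H; rewrite Dd. apply/eigenvalueP.
  exists ('e_j *m P).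
    rewrite -/AC AE !mulmxA mulmxK // -[_ *m diag_mx D]rowE row_diag_mx.
    by rewrite -scalemxAl.
  apply/negP => /eqP h.
  move: h => /(congr1 (mulmx^~ (invmx P))); rewrite mul0mx.
  rewrite mulmxK // => /rowP /(_ j); rewrite !mxE !eqxx /=.
  by move/eqP; rewrite oner_eq0.
have trD1 : \tr (diag_mx D) = f (\sum_j d j).
  by rewrite mxtrace_diag rmorph_sum; apply: eq_bigr => j _; rewrite Dd.
have trD2 : \tr (diag_mx D *m diag_mx D) = f (\sum_j d j ^+ 2).
  rewrite /mxtrace rmorph_sum; apply: eq_bigr => j _.
  by rewrite mul_diag_mx !mxE eqxx mulr1n Dd rmorphXn expr2.
have trD3 : \tr (diag_mx D *m diag_mx D *m diag_mx D) = f (\sum_j d j ^+ 3).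
  rewrite /mxtrace rmorph_sum; apply: eq_bigr => j _.
  by rewrite -mulmxA !mul_diag_mx !mxE eqxx !mulr1n Dd rmorphXn !exprS expr0 mulr1.
split; apply: (@complexI R); rewrite -tr_map ?map_mxM -/AC AE.
- by rewrite conjmx_tr.
- by rewrite conjmx_mul // conjmx_tr.
- by rewrite !conjmx_mul // conjmx_tr.
Qed.
End Spec.

Theorem lemma13 (R : realType) (n : nat) (e : rel 'I_n) (k l : nat) (s : R) :
  distance_regular e -> regular_deg e k -> lambda_param e l -> (0 < l)%N ->
  least_eigenvalue (adjmx R e) s ->
  (k%:R / `|s| < l%:R + k%:R / l%:R :> R).
Proof.
move=> [[sym irr] _] reg lam l0 [sev sleast].
have n0 : (0 < n)%N.
  case/eigenvalueP: sev => v _ /eqP vn0.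
  case: (posnP n) => // n0; exfalso; apply: vn0; apply/rowP => i.
  by move: (ltn_ord i); rewrite {2}n0.
case: (posnP k) => [->|k0].
  by rewrite !mul0r addr0 ltr0n.
have Asym : (adjmx R e)^T = adjmx R e.
  by apply/matrixP => i j; rewrite !mxE sym.
have [d [dev [T1 T2 T3]]] := spectral_real _ _ _ Asym.
apply: (final_ineq _ _ d) => //.
- by move=> j; apply: sleast.
- by rewrite -T1 tr_adj1.
- rewrite -T2. rewrite (tr_adj2 R n e k sym reg). by rewrite natrM.
- rewrite -T3. rewrite (tr_adj3 R n e k l sym reg lam). by rewrite !natrM.
Qed.
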